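(* If $X$ satisfies $selSS^*_{cd}(\mathcal{O},\mathcal{O})$ (i.e. $X$ is strongly selectively $(a)$), has countable extent, and $|X|<\mathfrak{b}$, then $X$ is selectively strongly star-Menger.
   Context: All spaces are regular. $St(A,\mathcal{U})=\bigcup\{U\in\mathcal{U}:U\cap A\neq\emptyset\}$. $\mathfrak{b}$ is the bounding number. $X$ has countable extent if every closed discrete subset of $X$ is countable. $selSS^*_{cd}(\mathcal{O},\mathcal{O})$: for every sequence $(\mathcal{U}_n:n\in\omega)$ of open covers and every sequence $(D_n:n\in\omega)$ of dense subsets of $X$ there are sets $C_n\subseteq D_n$, closed and discrete in $X$, such that $\{St(C_n,\mathcal{U}_n):n\in\omega\}$ covers $X$. $X$ is selectively strongly star-Menger if for every sequence $(\mathcal{U}_n)$ of open covers and every sequence $(D_n)$ of dense subsets there are finite $F_n\subseteq D_n$ with $\{St(F_n,\mathcal{U}_n):n\in\omega\}$ covering $X$. *)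

(* Defs.v *)
From HB Require Import structures.
From mathcomp Require Import all_boot all_order all_algebra.
From mathcomp Require Import all_classical all_reals all_analysis.
Set Implicit Arguments. Unset Strict Implicit. Unset Printing Implicit Defensive.
Local Open Scope classical_set_scope.

Definition open_cover {X : topologicalType} (U : set (set X)) : Prop :=
  (forall V, U V -> open V) /\ \bigcup_(V in U) V = setT.

Definition St {X : topologicalType} (A : set X) (U : set (set X)) : set X :=
  \bigcup_(V in [set V | U V /\ V `&` A !=set0]) V.

Definition closed_discrete {X : topologicalType} (C : set X) : Prop :=
  closed C /\ forall c, C c -> exists V, open V /\ V c /\ V `&` C = [set c].

Definition countable_extent (X : topologicalType) : Prop :=
  forall C : set X, closed_discrete C -> countable C.

(* |X| < b : every family of functions in omega^omega indexed by X
   is <=*-bounded (eventually dominated by a single function). *)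
Definition card_lt_bounding_number (X : Type) : Prop :=
  forall f : X -> (nat -> nat), exists g : nat -> nat,
    forall x, exists N, forall n, (N <= n)%N -> (f x n <= g n)%N.

Definition selSS_cd (X : topologicalType) : Prop :=
  forall (U : nat -> set (set X)) (D : nat -> set X),
    (forall n, open_cover (U n)) -> (forall n, dense (D n)) ->
    exists C : nat -> set X,
      (forall n, C n `<=` D n /\ closed_discrete (C n)) /\
      \bigcup_n St (C n) (U n) = setT.

Definition sel_strongly_star_Menger (X : topologicalType) : Prop :=
  forall (U : nat -> set (set X)) (D : nat -> set X),
    (forall n, open_cover (U n)) -> (forall n, dense (D n)) ->
    exists F : nat -> set X,
      (forall n, F n `<=` D n /\ finite_set (F n)) /\
      \bigcup_n St (F n) (U n) = setT.

(* Main.v *)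
Require Import Defs.
From mathcomp Require Import all_boot all_order all_algebra.
From mathcomp Require Import all_classical all_reals all_analysis.
Local Open Scope classical_set_scope.

Theorem mainTheorem14 (X : topologicalType) :
  regular_space X -> selSS_cd X -> countable_extent X ->
  card_lt_bounding_number X -> sel_strongly_star_Menger X.
Proof.
move=> _ H Hce Hb U D HU HD.
have hC : forall m, exists C : nat -> set X,
    (forall n, C n `<=` D m /\ closed_discrete (C n)) /\
    \bigcup_n St (C n) (U m) = setT.
  by move=> m; exact: (H (fun _ => U m) (fun _ => D m) (fun _ => HU m) (fun _ => HD m)).
have [Cf HCf] := choice hC.
pose E m := \bigcup_(j in [set: nat]) Cf m j.
have cE : forall m, exists f : X -> nat, {in E m &, injective f}.
  move=> m; apply/countable_injP; apply: bigcup_countable => // j _.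
  by apply: Hce; case: (HCf m) => /(_ j) [].
have [fm Hfm] := choice cE.
have key : forall x m, exists k, exists e, E m e /\ fm m e = k /\ St [set e] (U m) x.
  move=> x m; case: (HCf m) => _ Hcov.
  have : (\bigcup_n St (Cf m n) (U m)) x by rewrite Hcov.
  case=> j _ [V [UV [e [Ve Ce]]] Vx].
  exists (fm m e), e; split; first by exists j.
  split => //; exists V => //; split => //; by exists e.
have key2 : forall x, exists h : nat -> nat, forall m,
    exists e, E m e /\ fm m e = h m /\ St [set e] (U m) x.
  by move=> x; have [h Hh] := choice (key x); exists h.
have [fx Hfx] := choice key2.
have [g Hg] := Hb fx.
exists (fun m => [set e | E m e /\ (fm m e <= g m)%N]); split.
  move=> m; split.
    move=> e [[j _ Ce] _]; case: (HCf m) => /(_ j) [+ _] _; exact.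
  rewrite (eq_finite_set (card_esym (inj_card_eq (f := fm m) _))).
    apply: (@sub_finite_set _ _ `I_(g m).+1); last exact: finite_II.
    by move=> k [e [_ He] <-] /=; rewrite ltnS.
  move=> a b; rewrite !inE => -[Ea _] [Eb _]; apply: (Hfm m); by rewrite inE.
apply/seteqP; split => // x _.
have [N HN] := Hg x.
have [e [Ee [fe [V [UV [y [Vy ye]]] Vx]]]] := Hfx x N.
rewrite /= in ye; subst y.
exists N => //; exists V => //; split => //; exists e; split => //; split => //.
by rewrite fe; apply: HN.
Qed.
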